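(* Let $i\in\mathbb N$, let $\mathcal T$ be a tree with root $\emptyset$, let $v\succ\emptyset$ in $\mathcal T$ and let $(u_l)_{l=0}^r$ be the branch from $\emptyset$ to $v$. (1) Let $\gamma\in\Gamma$ with tree analysis $(I_t,\varepsilon_t,\eta_t)_{t\in\mathcal T}$, and let $y\in\mathscr B_{mT}$ be a normalised finitely supported vector such that (a) $v$ is the covering index for $y$, (b) $|d^*_\xi(y)|<4^{-i-3}$ for all $\xi\in\Gamma$, and (c) $|e^*_\gamma(y)|>4^{-i-1}$. Then $r\le i+1$. (2) Let $f\in W$ with tree analysis $(f_t)_{t\in\mathcal T}$, let $z=e_l\in T$ for some $l\in\mathbb N$, and assume (a) $f_v=e^*_l$ and (b) $f(z)>4^{-i-1}$. Then $r\le i$.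
   Context: Fix sequences $(m_j)$, $(n_j)$ of natural numbers with $m_1=n_1=4$, $m_{j+1}\ge m_j^2$, $n_{j+1}\ge m_{j+1}^2(4n_j)^{\log_2 m_{j+1}}$. Mixed Tsirelson space $T$: $W\subset c_{00}$ is the smallest set containing $\pm e^*_k$ ($k\in\mathbb N$) such that if $j\in\mathbb N$, $d\le n_j$ and $f_1<\dots<f_d\in W$ then $m_j^{-1}\sum f_i\in W$; $T$ is the completion of $c_{00}$ under $\sup_{f\in W}f(x)$, with unit vector basis $(e_n)$. A tree analysis of $f\in W$ is a family $(f_t)_{t\in\mathcal T}$ indexed by a finite tree with root $\emptyset$ such that $f_\emptyset=f$, $f_t=\pm e^*_k$ for terminal $t$, and for non-terminal $t$, $f_t=m_j^{-1}\sum_{s\in S_t}f_s$ for some $j$ with $(f_s)_{s\in S_t}$ a block sequence in $W$ of length at most $n_j$ ($S_t$ = immediate successors of $t$). The space $\mathscr B_{mT}$: $\Delta_1=\{1\}$; given $\Delta_1,\dots,\Delta_q$, with $\Gamma_0=\emptyset$, $\Gamma_p=\bigcup_{r\le p}\Delta_r$, $\Delta_{q+1}$ consists of the tuples $(q+1,0,m_j,\varepsilon e^*_\eta)$ with $j\le q+1$, $\varepsilon=\pm1$, $\eta\in\Gamma_q$, and the tuples $(q+1,\xi,m_j,\varepsilon e^*_\eta)$ with $1\le p<q$, $j\le p$, $\xi\in\Delta_p$, $w(\xi)=m_j^{-1}$, $\mathrm{age}(\xi)<n_j$, $\varepsilon=\pm1$, $\eta\in\Gamma_q\setminus\Gamma_p$;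 weight $w=m_j^{-1}$, rank $q+1$, age $1$ resp. $\mathrm{age}(\xi)+1$. $\Gamma=\bigcup\Delta_q$. In $\ell_1(\Gamma)$, $d^*_\gamma=e^*_\gamma-c^*_\gamma$ with $c^*_\gamma=m_j^{-1}\varepsilon P^*_{(0,q]}e^*_\eta$ for $\gamma=(q+1,0,m_j,\varepsilon e^*_\eta)$ and $c^*_\gamma=e^*_\xi+m_j^{-1}\varepsilon P^*_{(p,q]}e^*_\eta$ for $\gamma=(q+1,\xi,m_j,\varepsilon e^*_\eta)$, $\xi\in\Delta_p$ ($P^*_{(p,q]}$ the basis projection onto $\mathrm{span}\{d^*_\delta:\mathrm{rank}\,\delta\in(p,q]\}$). $(d^*_\gamma)$ is a basis of $\ell_1(\Gamma)$, $(d_\gamma)\subset\ell_\infty(\Gamma)$ is biorthogonal, $\mathscr B_{mT}=\overline{\mathrm{span}}\{d_\gamma\}$, and $e^*_\gamma(x)=x(\gamma)$. For an interval $I$, $P_I$ is the projection of $\mathscr B_{mT}$ onto $\overline{\mathrm{span}}\{d_\delta:\mathrm{rank}\,\delta\in I\}$ along the other $d_\delta$, and $e^*_\eta P_I=P^*_Ie^*_\eta$. $\mathrm{rng}$ of a finitely supported vector (resp. of a functional in $\mathrm{span}\{d^*_\delta\}$) is the smallest interval $[p,q]$ of ranks such that it lies in the span of the $d_\delta$ (resp. $d^*_\delta$) with rank in $[p,q]$. Evaluation analysis: for $\gamma\in\Gamma$ with $w(\gamma)=m_j^{-1}$ there are unique $a\le n_j$ and $(\xi_k,\varepsilon_k,\eta_k)_{k=1}^a$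 with $\xi_a=\gamma$, $\xi_1=(q_1+1,0,m_j,\varepsilon_1e^*_{\eta_1})$, $\xi_k=(q_k+1,\xi_{k-1},m_j,\varepsilon_ke^*_{\eta_k})$ for $k>1$; set $I_1=[1,q_1]$, $I_k=[q_{k-1}+2,q_k]$. Then $e^*_\gamma=\sum_k d^*_{\xi_k}+m_j^{-1}\sum_k\varepsilon_kP^*_{I_k}e^*_{\eta_k}$. For an interval $I$, $e^*_\gamma$ is $I$-decomposable if $A_I=\{k:P^*_{I_k\cap I}e^*_{\eta_k}\neq0\}\neq\emptyset$, and then its $I$-analysis is $(I_k\cap I,\varepsilon_k,\eta_k)_{k\in A_I}$. Tree analysis of $e^*_\gamma$: the family $(I_t,\varepsilon_t,\eta_t)_{t\in\mathcal T}$ over a finite tree of finite sequences with root $\emptyset$, defined by $\eta_\emptyset=\gamma$, $I_\emptyset=(0,\mathrm{rank}\,\gamma)$, $\varepsilon_\emptyset=1$, $S_\emptyset=\{(1),\dots,(a)\}$ with $(I_{(k)},\varepsilon_{(k)},\eta_{(k)})=(I_k,\varepsilon_k,\eta_k)$ from the evaluation analysis; inductively, if $e^*_{\eta_t}$ is $I_t$-decomposable with $I_t$-analysis $(I'_k,\varepsilon'_k,\eta'_k)_{k\in A}$, then $S_t=\{t^\frown k:k\in A\}$ with $(I_{t^\frown k},\varepsilon_{t^\frown k},\eta_{t^\frown k})=(I'_k,\varepsilon'_k,\eta'_k)$; otherwise $t$ is terminal. For a finitely supported $y$, the covering index for $y$ is the maximal $t\in\mathcal T$ with $\mathrm{rng}\,y\cap\mathrm{rng}\,e^*_\gamma\subseteq\mathrm{rng}(e^*_{\eta_t}P_{I_t})$.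 A branch of length $r$ from $u$ to $v$ in a tree is a sequence $(u_l)_{l=0}^r$ with $u_0=u$, $u_{l+1}$ an immediate successor of $u_l$, $u_r=v$. *)

(* Defs.v *)
From Stdlib Require Import Reals List Arith Lia.
Import ListNotations.
Open Scope R_scope.

Definition good_seqs (m n : nat -> nat) : Prop :=
  m 1%nat = 4%nat /\ n 1%nat = 4%nat /\
  (forall j, (1 <= j)%nat -> (m j ^ 2 <= m (S j))%nat) /\
  (forall j, (1 <= j)%nat ->
     INR (m (S j)) ^ 2 * Rpower (4 * INR (n j)) (ln (INR (m (S j))) / ln 2)
       <= INR (n (S j))).

Definition sgn (e : bool) : R := if e then 1 else -1.

Definition estar (k : nat) : nat -> R := fun x => if Nat.eqb x k then 1 else 0.

Definition blocks (f g : nat -> R) : Prop :=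
  forall x y, f x <> 0 -> g y <> 0 -> (x < y)%nat.

Definition block_seq (fs : list (nat -> R)) : Prop :=
  forall i1 i2, (i1 < i2 < length fs)%nat ->
    blocks (nth i1 fs (fun _ => 0)) (nth i2 fs (fun _ => 0)).

Definition sumf (fs : list (nat -> R)) : nat -> R :=
  fun x => fold_right (fun f acc => f x + acc) 0 fs.

Inductive inW (m n : nat -> nat) : (nat -> R) -> Prop :=
| inW_e : forall (k : nat) (e : bool), inW m n (fun x => sgn e * estar k x)
| inW_avg : forall (j : nat) (fs : list (nat -> R)),
    (1 <= j)%nat -> (1 <= length fs <= n j)%nat ->
    Forall (inW m n) fs -> block_seq fs ->
    inW m n (fun x => / INR (m j) * sumf fs x).

Definition is_tree (Tn : list nat -> Prop) : Prop :=
  Tn nil /\ (forall t k, Tn (t ++ [k]) -> Tn t) /\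
  exists L : list (list nat), forall t, Tn t -> In t L.

Definition branch (Tn : list nat -> Prop) (u : nat -> list nat) (r : nat)
  (v : list nat) : Prop :=
  u 0%nat = nil /\ u r = v /\
  forall l, (l < r)%nat -> Tn (u (S l)) /\ exists k, u (S l) = u l ++ [k].

Definition W_tree_analysis (m n : nat -> nat) (f : nat -> R)
  (Tn : list nat -> Prop) (ft : list nat -> nat -> R) : Prop :=
  is_tree Tn /\
  (forall x, ft nil x = f x) /\
  (forall t, Tn t -> (forall k, ~ Tn (t ++ [k])) ->
     exists k e, forall x, ft t x = sgn e * estar k x) /\
  (forall t, Tn t -> (exists k, Tn (t ++ [k])) ->
     exists (j : nat) (S : list (list nat)),
       (1 <= j)%nat /\ NoDup S /\
       (forall s, In s S <-> exists k, s = t ++ [k] /\ Tn s) /\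
       (length S <= n j)%nat /\
       Forall (fun s => inW m n (ft s)) S /\
       block_seq (map ft S) /\
       (forall x, ft t x = / INR (m j) * sumf (map ft S) x)).

(* Codes for elements of Gamma:
   G1                 = the element 1 of Delta_1,
   G0 r j e eta       = (r, 0, m_j, sgn e e*_eta)        (r = q+1),
   GS r xi j e eta    = (r, xi, m_j, sgn e e*_eta).          *)
Inductive gam : Type :=
| G1 : gam
| G0 : nat -> nat -> bool -> gam -> gam
| GS : nat -> gam -> nat -> bool -> gam -> gam.

Definition gam_eq_dec : forall x y : gam, {x = y} + {x <> y}.
Proof. decide equality; try apply Bool.bool_dec; try apply Nat.eq_dec. Defined.

Definition rank (g : gam) : nat :=
  match g with G1 => 1%nat | G0 r _ _ _ => r | GS r _ _ _ _ => r end.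

(* weight index: w(g) = 1/m_(wj g) (undefined for G1, coded 0) *)
Definition wj (g : gam) : nat :=
  match g with G1 => 0%nat | G0 _ j _ _ => j | GS _ _ j _ _ => j end.

Fixpoint age (g : gam) : nat :=
  match g with G1 => 0%nat | G0 _ _ _ _ => 1%nat | GS _ xi _ _ _ => S (age xi) end.

Fixpoint valid (n : nat -> nat) (g : gam) : Prop :=
  match g with
  | G1 => True
  | G0 r j _ eta =>
      valid n eta /\ (2 <= r)%nat /\ (1 <= j <= r)%nat /\ (rank eta <= r - 1)%nat
  | GS r xi j _ eta =>
      valid n xi /\ valid n eta /\
      (1 <= rank xi)%nat /\ (rank xi < r - 1)%nat /\
      (1 <= j <= rank xi)%nat /\ wj xi = j /\ (age xi < n j)%nat /\
      (rank xi < rank eta <= r - 1)%nat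
  end.

(* restriction of coefficients (w.r.t. the basis (d_delta)) to ranks in [lo,hi] *)
Definition restr (lo hi : nat) (a : gam -> R) : gam -> R :=
  fun d => if andb (Nat.leb lo (rank d)) (Nat.leb (rank d) hi) then a d else 0.

(* ev m g a = e*_g ( sum_delta a_delta d_delta ):
   e*_g = d*_g + c*_g, with c*_g as in the definition and
   P*_I e*_eta (x) = e*_eta (P_I x). *)
Fixpoint ev (m : nat -> nat) (g : gam) (a : gam -> R) : R :=
  match g with
  | G1 => a G1
  | G0 r j e eta =>
      a g + / INR (m j) * sgn e * ev m eta (restr 1 (r - 1) a)
  | GS r xi j e eta =>
      a g + ev m xi a + / INR (m j) * sgn e * ev m eta (restr (S (rank xi)) (r - 1) a)
  end.

Definition dcoef (m : nat -> nat) (eta delta : gam) : R :=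
  ev m eta (fun d => if gam_eq_dec d delta then 1 else 0).

Definition itv : Type := (nat * nat)%type.
Definition in_itv (I : itv) (k : nat) : Prop := (fst I <= k <= snd I)%nat.
Definition inter (I J : itv) : itv := (Nat.max (fst I) (fst J), Nat.min (snd I) (snd J)).

Definition hull (S : nat -> Prop) : nat -> Prop :=
  fun k => exists k1 k2, S k1 /\ S k2 /\ (k1 <= k <= k2)%nat.

Definition rng_vec (n : nat -> nat) (a : gam -> R) : nat -> Prop :=
  hull (fun k => exists d, valid n d /\ a d <> 0 /\ rank d = k).

Definition rng_fun (m n : nat -> nat) (eta : gam) (I : itv) : nat -> Prop :=
  hull (fun k => exists d, valid n d /\ in_itv I (rank d) /\
                           dcoef m eta d <> 0 /\ rank d = k).

Definition rng_estar (m n : nat -> nat) (g : gam) : nat -> Prop :=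
  hull (fun k => exists d, valid n d /\ dcoef m g d <> 0 /\ rank d = k).

Definition Pnz (m n : nat -> nat) (eta : gam) (I : itv) : Prop :=
  exists d, valid n d /\ in_itv I (rank d) /\ dcoef m eta d <> 0.

Fixpoint eanal (g : gam) : list (itv * bool * gam) :=
  match g with
  | G1 => nil
  | G0 r _ e eta => [((1%nat, (r - 1)%nat), e, eta)]
  | GS r xi _ e eta => eanal xi ++ [((S (rank xi), (r - 1)%nat), e, eta)]
  end.

Inductive tnode (m n : nat -> nat) (g : gam) : list nat -> itv * bool * gam -> Prop :=
| tn_root : tnode m n g nil ((1%nat, (rank g - 1)%nat), true, g)
| tn_top : forall k Ik ek etak,
    nth_error (eanal g) k = Some (Ik, ek, etak) ->
    tnode m n g [S k] (Ik, ek, etak)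
| tn_step : forall t I e eta k Ik ek etak,
    t <> nil -> tnode m n g t (I, e, eta) ->
    nth_error (eanal eta) k = Some (Ik, ek, etak) ->
    Pnz m n etak (inter Ik I) ->
    tnode m n g (t ++ [S k]) (inter Ik I, ek, etak).

Definition tree_of (m n : nat -> nat) (g : gam) : list nat -> Prop :=
  fun t => exists lbl, tnode m n g t lbl.

Definition covers (m n : nat -> nat) (g : gam) (a : gam -> R) (t : list nat) : Prop :=
  exists I e eta, tnode m n g t (I, e, eta) /\
    forall k, rng_vec n a k -> rng_estar m n g k -> rng_fun m n eta I k.

Definition prefix (v t : list nat) : Prop := exists w, t = v ++ w.

Definition covering_index (m n : nat -> nat) (g : gam) (a : gam -> R) (v : list nat) : Prop :=
  covers m n g a v /\ forall t, covers m n g a t -> prefix v t -> t = v.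

Definition fin_supp (n : nat -> nat) (a : gam -> R) : Prop :=
  (forall d, a d <> 0 -> valid n d) /\
  exists L : list gam, forall d, a d <> 0 -> In d L.

Definition normalised (m n : nat -> nat) (a : gam -> R) : Prop :=
  (forall eta, valid n eta -> Rabs (ev m eta a) <= 1) /\
  (forall eps, 0 < eps -> exists eta, valid n eta /\ 1 - eps < Rabs (ev m eta a)).

(* Main.v *)
Require Import Defs.
From Stdlib Require Import Reals List Lra Lia FunctionalExtensionality.
Import ListNotations.
Open Scope R_scope.


Ltac rcase := unfold restr; cbn [rank] in *; repeat match goal with |- context [Nat.leb ?x ?y] => destruct (Nat.leb_spec x y) end; simpl; try lra; try (exfalso; lia).

Lemma m_ge4 m n : good_seqs m n -> forall j, (1 <= j)%nat -> (4 <= m j)%nat.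
Proof.
  intros [H1 [_ [H3 _]]] j Hj. induction j as [|j IH]; [lia|].
  destruct j as [|j]; [lia|].
  assert (A := IH ltac:(lia)). assert (B := H3 (S j) ltac:(lia)).
  rewrite Nat.pow_2_r in B. nia.
Qed.

Lemma restr_add lo hi (f h : gam -> R) :
  restr lo hi (fun x => f x + h x) = fun x => restr lo hi f x + restr lo hi h x.
Proof. extensionality x. rcase. Qed.
Lemma restr_sub lo hi (f h : gam -> R) :
  restr lo hi (fun x => f x - h x) = fun x => restr lo hi f x - restr lo hi h x.
Proof. extensionality x. rcase. Qed.
Lemma restr_scal lo hi s (f : gam -> R) :
  restr lo hi (fun x => s * f x) = fun x => s * restr lo hi f x.
Proof. extensionality x. rcase. Qed.
Lemma restr_0 lo hi : restr lo hi (fun _ : gam => 0) = fun _ => 0.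
Proof. extensionality x. rcase. Qed.

Lemma ev_zero m g : ev m g (fun _ => 0) = 0.
Proof. induction g; simpl; rewrite ?restr_0, ?IHg1, ?IHg2, ?IHg; ring. Qed.
Lemma ev_add m g : forall f h, ev m g (fun x => f x + h x) = ev m g f + ev m g h.
Proof. induction g; intros; simpl; rewrite ?restr_add, ?IHg1, ?IHg2, ?IHg; ring. Qed.
Lemma ev_sub m g : forall f h, ev m g (fun x => f x - h x) = ev m g f - ev m g h.
Proof. induction g; intros; simpl; rewrite ?restr_sub, ?IHg1, ?IHg2, ?IHg; ring. Qed.
Lemma ev_scal m g : forall s f, ev m g (fun x => s * f x) = s * ev m g f.
Proof. induction g; intros; simpl; rewrite ?restr_scal, ?IHg1, ?IHg2, ?IHg; ring. Qed.

Lemma restr_agree lo hi (b b' : gam -> R) :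
  (forall d, (lo <= rank d <= hi)%nat -> b d = b' d) -> restr lo hi b = restr lo hi b'.
Proof. intros H; extensionality d; unfold restr;
  destruct (Nat.leb_spec lo (rank d)), (Nat.leb_spec (rank d) hi); simpl; auto. Qed.

Lemma valid_rank n g : valid n g -> (1 <= rank g)%nat.
Proof. destruct g; simpl; intros; try lia. Qed.

Lemma ev_local m n g : valid n g -> forall (bb bb' : gam -> R),
  (forall d, (1 <= rank d <= rank g)%nat -> bb d = bb' d) -> ev m g bb = ev m g bb'.
Proof.
  induction g as [|r j e eta IH|r xi IHxi j e eta IHeta]; intros Hv bb bb' H; simpl in *.
  - apply H; simpl; lia.
  - destruct Hv as [Hv1 [Hr [Hj Hre]]].
    rewrite (H (G0 r j e eta)) by (simpl; lia).
    rewrite (restr_agree 1 (r-1) bb bb') by (intros; apply H; lia). reflexivity.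
  - destruct Hv as [Hx [He [H1 [H2 [H3 [H4 [H5 H6]]]]]]].
    rewrite (H (GS r xi j e eta)) by (simpl; lia).
    rewrite (IHxi Hx bb bb') by (intros; apply H; lia).
    rewrite (restr_agree (S (rank xi)) (r-1) bb bb') by (intros; apply H; lia). reflexivity.
Qed.


Lemma Rabs_sgn e : Rabs (sgn e) = 1.
Proof. destruct e; unfold sgn; [apply Rabs_R1|]. rewrite Rabs_left; lra. Qed.

Lemma abs_wt M e X : 4 <= M -> Rabs (/M * sgn e * X) <= /4 * Rabs X.
Proof.
  intros HM. rewrite !Rabs_mult, Rabs_sgn, Rabs_right.
  2:{ left; apply Rinv_0_lt_compat; lra. }
  rewrite Rmult_1_r. apply Rmult_le_compat_r; [apply Rabs_pos|].
  apply Rinv_le_contravar; lra.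
Qed.

Lemma PB m n a : (forall j, (1 <= j)%nat -> 4 <= INR (m j)) ->
  (forall z, valid n z -> Rabs (ev m z a) <= 1) ->
  forall g, valid n g -> forall N, Rabs (ev m g (restr 1 N a)) <= 2.
Proof.
  intros Hm Ha g. induction g as [|r j e eta IH|r xi IHxi j e eta IHeta]; intros Hv N.
  - destruct (Nat.leb_spec 1 N).
    + rewrite (ev_local m n G1 I (restr 1 N a) a) by (intros; rcase).
      specialize (Ha G1 I); lra.
    + simpl. replace (restr 1 N a G1) with 0 by rcase. rewrite Rabs_R0; lra.
  - destruct (Nat.leb_spec r N).
    + rewrite (ev_local m n _ Hv (restr 1 N a) a) by (intros d Hd; simpl in Hd; rcase).
      specialize (Ha _ Hv); lra.
    + simpl in Hv |- *. destruct Hv as [Hv1 [Hr [Hj Hre]]].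
      replace (restr 1 N a (G0 r j e eta)) with 0 by (rcase).
      replace (restr 1 (r-1) (restr 1 N a)) with (restr 1 N a) by (extensionality d; rcase).
      rewrite Rplus_0_l. eapply Rle_trans; [apply abs_wt, Hm; lia|].
      specialize (IH Hv1 N); lra.
  - destruct (Nat.leb_spec r N).
    + rewrite (ev_local m n _ Hv (restr 1 N a) a) by (intros d Hd; simpl in Hd; rcase).
      specialize (Ha _ Hv); lra.
    + simpl in Hv |- *. destruct Hv as [Hx [He [H1 [H2 [H3 [H4 [H5 H6]]]]]]].
      replace (restr 1 N a (GS r xi j e eta)) with 0 by (rcase).
      rewrite Rplus_0_l.
      destruct (Nat.leb_spec (rank xi) N).
      * rewrite (ev_local m n _ Hx (restr 1 N a) a) by (intros d Hd; rcase).
        replace (restr (S (rank xi)) (r-1) (restr 1 N a)) with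
          (fun d => restr 1 N a d - restr 1 (rank xi) a d) by (extensionality d; rcase).
        rewrite ev_sub.
        eapply Rle_trans; [apply Rabs_triang|].
        eapply Rle_trans; [apply Rplus_le_compat; [apply Ha, Hx| apply abs_wt, Hm; lia]|].
        pose proof (IHeta He N). pose proof (IHeta He (rank xi)).
        assert (Rabs (ev m eta (restr 1 N a) - ev m eta (restr 1 (rank xi) a)) <= 4).
        { unfold Rminus. eapply Rle_trans; [apply Rabs_triang|]. rewrite Rabs_Ropp. lra. }
        lra.
      * replace (restr (S (rank xi)) (r-1) (restr 1 N a)) with (fun _ : gam => 0) by (extensionality d; rcase).
        rewrite ev_zero, Rmult_0_r, Rplus_0_r. apply IHxi; auto.
Qed.

Lemma PB2 m n a : (forall j, (1 <= j)%nat -> 4 <= INR (m j)) ->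
  (forall z, valid n z -> Rabs (ev m z a) <= 1) ->
  forall g, valid n g -> forall lo hi, (1 <= lo)%nat -> Rabs (ev m g (restr lo hi a)) <= 4.
Proof.
  intros Hm Ha g Hg lo hi Hlo. destruct (Nat.leb_spec lo hi).
  - replace (restr lo hi a) with (fun d => restr 1 hi a d - restr 1 (lo-1) a d) by (extensionality d; rcase).
    rewrite ev_sub. unfold Rminus. eapply Rle_trans; [apply Rabs_triang|]. rewrite Rabs_Ropp.
    pose proof (PB m n a Hm Ha g Hg hi). pose proof (PB m n a Hm Ha g Hg (lo-1)). lra.
  - replace (restr lo hi a) with (fun _ : gam => 0) by (extensionality d; rcase).
    rewrite ev_zero, Rabs_R0; lra.
Qed.


Lemma eanal_props n g : valid n g -> forall I e eta, In (I, e, eta) (eanal g) ->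
  valid n eta /\ (1 <= fst I)%nat /\ (snd I < rank g)%nat /\ (1 <= wj g)%nat.
Proof.
  induction g as [|r j e0 eta0 IH|r xi IHxi j e0 eta0 IHeta]; intros Hv I e eta Hin; simpl in *.
  - contradiction.
  - destruct Hin as [Hin|[]]. inversion Hin; subst. simpl. intuition lia.
  - destruct Hv as [Hx [He [H1 [H2 [H3 [H4 [H5 H6]]]]]]].
    apply in_app_or in Hin. destruct Hin as [Hin|[Hin|[]]].
    + destruct (IHxi Hx _ _ _ Hin) as [A [B [C D]]]. intuition lia.
    + inversion Hin; subst. simpl. intuition lia.
Qed.

Lemma restr_id lo hi (b : gam -> R) :
  (forall d, b d <> 0 -> (lo <= rank d <= hi)%nat) -> restr lo hi b = b.
Proof.
  intros H; extensionality d. destruct (Req_dec (b d) 0) as [E|E].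
  - unfold restr. rewrite E. destruct (andb _ _); auto.
  - specialize (H d E). rcase.
Qed.

Lemma restr_null lo hi (b : gam -> R) :
  (forall d, b d <> 0 -> ~ (lo <= rank d <= hi)%nat) -> restr lo hi b = fun _ => 0.
Proof.
  intros H; extensionality d. destruct (Req_dec (b d) 0) as [E|E].
  - unfold restr. rewrite E. destruct (andb _ _); auto.
  - specialize (H d E). rcase.
Qed.

Lemma zero_at (b : gam -> R) P d : (forall d, b d <> 0 -> P d) -> ~ P d -> b d = 0.
Proof. intros H NP. destruct (Req_dec (b d) 0); auto. exfalso; auto. Qed.

Lemma ev_step m n eta : valid n eta -> forall k I e' eta' b,
  nth_error (eanal eta) k = Some (I, e', eta') ->
  (forall d, b d <> 0 -> in_itv I (rank d)) ->
  ev m eta b = / INR (m (wj eta)) * sgn e' * ev m eta' b.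
Proof.
  unfold in_itv.
  induction eta as [|r j e0 eta0 IH|r xi IHxi j e0 eta0 IHeta]; intros Hv k I e' eta' b Hk Hb; simpl in *.
  - destruct k; discriminate.
  - destruct Hv as [Hv1 [Hr [Hj Hre]]].
    destruct k as [|k]; [|destruct k; discriminate]. simpl in Hk. injection Hk as <- <- <-. simpl in Hb.
    rewrite (zero_at b _ (G0 r j e0 eta0) Hb) by (simpl; lia).
    rewrite restr_id by exact Hb. ring.
  - destruct Hv as [Hx [He [H1 [H2 [H3 [H4 [H5 H6]]]]]]].
    destruct (Nat.lt_ge_cases k (length (eanal xi))) as [L|L].
    + rewrite nth_error_app1 in Hk by exact L.
      destruct (eanal_props n xi Hx I e' eta') as [A [B [C D]]]; [eapply nth_error_In; eauto|].
      rewrite (IHxi Hx k I e' eta' b Hk Hb). rewrite H4.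
      rewrite (zero_at b _ (GS r xi j e0 eta0) Hb) by (simpl; lia).
      rewrite restr_null by (intros d Hd; specialize (Hb d Hd); lia).
      rewrite ev_zero. ring.
    + rewrite nth_error_app2 in Hk by exact L.
      destruct (k - length (eanal xi))%nat as [|k'] eqn:E; [|destruct k'; discriminate].
      simpl in Hk. injection Hk as <- <- <-. simpl in Hb.
      rewrite (zero_at b _ (GS r xi j e0 eta0) Hb) by (simpl; lia).
      rewrite (ev_local m n xi Hx b (fun _ => 0)) by (intros d Hd; apply (zero_at b _ d Hb); lia).
      rewrite ev_zero. rewrite restr_id by exact Hb. ring.
Qed.


Definition subI (J I : itv) : Prop := (fst I <= fst J)%nat /\ (snd J <= snd I)%nat.

Lemma tnode_valid m n g : valid n g -> forall t lbl, tnode m n g t lbl ->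
  valid n (snd lbl) /\ (1 <= fst (fst (fst lbl)))%nat.
Proof.
  intros Hg t lbl H. induction H; simpl.
  - auto.
  - destruct (eanal_props n g Hg Ik ek etak) as [A [B _]]; [eapply nth_error_In; eauto|]. auto.
  - simpl in IHtnode. destruct IHtnode as [A B].
    destruct (eanal_props n eta A Ik ek etak) as [C [D _]]; [eapply nth_error_In; eauto|].
    split; auto. lia.
Qed.

Lemma tnode_nil m n g lbl : tnode m n g nil lbl -> lbl = ((1%nat, (rank g - 1)%nat), true, g).
Proof.
  intros H. remember (@nil nat) as s. destruct H.
  - reflexivity.
  - discriminate.
  - destruct t; discriminate.
Qed.

Lemma app_single_nil (t : list nat) x y : t ++ [x] = [y] -> t = nil /\ x = y.
Proof.
  destruct t as [|z t]; simpl; intros H.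
  - inversion H; auto.
  - inversion H. destruct t; discriminate.
Qed.

Lemma tnode_unique m n g : forall t l1, tnode m n g t l1 -> forall l2, tnode m n g t l2 -> l1 = l2.
Proof.
  intros t l1 H1. induction H1; intros l2 K.
  - symmetry; eapply tnode_nil; eauto.
  - remember [S k] as s. destruct K.
    + discriminate.
    + injection Heqs as E. subst. congruence.
    + apply app_single_nil in Heqs. tauto.
  - remember (t ++ [S k]) as s. destruct K.
    + destruct t; discriminate.
    + symmetry in Heqs. apply app_single_nil in Heqs. tauto.
    + apply app_inj_tail in Heqs. destruct Heqs as [E1 E2]. injection E2 as E2. subst.
      specialize (IHtnode _ K). injection IHtnode as <- <- <-. congruence.
Qed.

Lemma tnode_child m n g t I e eta x J e' eta' :
  tnode m n g t (I, e, eta) -> tnode m n g (t ++ [x]) (J, e', eta') ->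
  exists k Ik, nth_error (eanal eta) k = Some (Ik, e', eta') /\ subI J Ik /\
    (t <> nil -> subI J I).
Proof.
  intros H1 H2. remember (t ++ [x]) as s. remember (J, e', eta') as lb. destruct H2.
  - destruct t; discriminate.
  - symmetry in Heqs. apply app_single_nil in Heqs. destruct Heqs as [-> ->].
    apply tnode_nil in H1. injection H1 as -> -> ->. injection Heqlb as -> -> ->.
    exists k, J. unfold subI; repeat split; try lia; try tauto.
  - apply app_inj_tail in Heqs. destruct Heqs as [-> <-].
    pose proof (tnode_unique m n g _ _ H2 _ H1) as U. injection U as -> -> ->.
    injection Heqlb as <- <- <-.
    exists k, Ik. unfold subI, inter; simpl. repeat split; try lia.
    exact H0.
Qed.


Lemma arith k r c : / 4 ^ k < (/ 4) ^ r * 4 ^ c -> (r < k + c)%nat.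
Proof.
  intros H. destruct (Nat.lt_ge_cases r (k + c)) as [L|L]; auto. exfalso.
  rewrite pow_inv in H.
  assert (A : 4 ^ (k + c) <= 4 ^ r) by (apply Rle_pow; lra || lia).
  rewrite pow_add in A.
  assert (P1 : 0 < 4 ^ k) by (apply pow_lt; lra).
  assert (P2 : 0 < 4 ^ c) by (apply pow_lt; lra).
  assert (P3 : 0 < 4 ^ r) by (apply pow_lt; lra).
  assert (B : / 4 ^ r * 4 ^ c <= / 4 ^ k).
  { apply (Rmult_le_reg_r (4 ^ r * 4 ^ k)). nra.
    replace (/ 4 ^ r * 4 ^ c * (4 ^ r * 4 ^ k)) with (4 ^ c * 4 ^ k) by (field; lra).
    replace (/ 4 ^ k * (4 ^ r * 4 ^ k)) with (4 ^ r) by (field; lra). lra. }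
  lra.
Qed.

Lemma zero_part m g : forall L c, (forall d, c d <> 0 -> In d L) ->
  (forall d, c d <> 0 -> dcoef m g d = 0) -> ev m g c = 0.
Proof.
  induction L as [|d0 L IH]; intros c HL Hd.
  - replace c with (fun _ : gam => 0). apply ev_zero.
    extensionality x. destruct (Req_dec (c x) 0); auto. destruct (HL x H).
  - set (c' := fun x => if gam_eq_dec x d0 then 0 else c x).
    replace c with (fun x => c d0 * (if gam_eq_dec x d0 then 1 else 0) + c' x).
    2:{ extensionality x. unfold c'. destruct (gam_eq_dec x d0); subst; ring. }
    rewrite ev_add, ev_scal. fold (dcoef m g d0).
    rewrite IH.
    + destruct (Req_dec (c d0) 0) as [E|E]; [rewrite E; ring|]. rewrite (Hd d0 E). ring.
    + intros d. unfold c'. destruct (gam_eq_dec d d0); [tauto|]. intros H.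
      destruct (HL d H); [congruence|auto].
    + intros d. unfold c'. destruct (gam_eq_dec d d0); [tauto|]. apply Hd.
Qed.

Lemma part1 m n i g a v u r :
  (forall j, (1 <= j)%nat -> 4 <= INR (m j)) -> valid n g ->
  branch (tree_of m n g) u r v -> fin_supp n a -> normalised m n a ->
  covering_index m n g a v -> / 4 ^ (i + 1) < Rabs (ev m g a) -> (r <= i + 1)%nat.
Proof.
  intros Hm Hg [Hu0 [Hur Hbr]] [Hsv [L HL]] [Hnorm _] [[Iv [e0 [etav [Hv Hcov]]]] _] Hgt.
  assert (S1 : forall d, a d <> 0 -> dcoef m g d <> 0 -> in_itv Iv (rank d)).
  { intros d Ha Hdc. assert (Vd := Hsv d Ha).
    destruct (Hcov (rank d)) as [k1 [k2 [[d1 [_ [I1 [_ R1]]]] [[d2 [_ [I2 [_ R2]]]] Hk]]]].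
    - exists (rank d), (rank d). split; [|split]; [exists d; auto|exists d; auto|lia].
    - exists (rank d), (rank d). split; [|split]; [exists d; auto|exists d; auto|lia].
    - unfold in_itv in *. lia. }
  set (b := restr (fst Iv) (snd Iv) a).
  assert (Hbs : forall d, b d <> 0 -> in_itv Iv (rank d)).
  { intros d. unfold b, restr, in_itv.
    destruct (Nat.leb_spec (fst Iv) (rank d)), (Nat.leb_spec (rank d) (snd Iv)); simpl; intros; try lia; lra. }
  assert (S2 : ev m g a = ev m g b).
  { replace a with (fun x => b x + (a x - b x)) at 1 by (extensionality x; ring).
    rewrite ev_add. rewrite (zero_part m g L (fun x => a x - b x)); [ring| |].
    - intros d H. apply HL. intros E. apply H. unfold b, restr. rewrite E.
      destruct (andb _ _); ring.
    - intros d H. destruct (Req_dec (dcoef m g d) 0) as [E|E]; auto. exfalso. apply H.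
      assert (Ad : a d <> 0). { intros E'. apply H. unfold b, restr. rewrite E'. destruct (andb _ _); ring. }
      specialize (S1 d Ad E). unfold b, restr. unfold in_itv in S1.
      destruct (Nat.leb_spec (fst Iv) (rank d)), (Nat.leb_spec (rank d) (snd Iv)); simpl; try lia; ring. }
  assert (Hne : forall l, (1 <= l)%nat -> (l <= r)%nat -> u l <> nil).
  { intros l' H1 H2. destruct l' as [|l']; [lia|]. destruct (Hbr l' ltac:(lia)) as [_ [k0 Hk0]].
    rewrite Hk0. destruct (u l'); discriminate. }
  assert (Q : forall j, (j <= r)%nat -> forall I e eta, tnode m n g (u (r - j)%nat) (I, e, eta) ->
     ((1 <= r - j)%nat -> subI Iv I) /\ Rabs (ev m eta b) <= (/ 4) ^ j * Rabs (ev m etav b)).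
  { induction j as [|j IH]; intros Hj I e eta Ht.
    - rewrite Nat.sub_0_r, Hur in Ht. pose proof (tnode_unique m n g _ _ Ht _ Hv) as U.
      injection U as -> -> ->. split; [unfold subI; lia|]. simpl; lra.
    - set (l := (r - S j)%nat). assert (El : (r - j)%nat = S l) by (unfold l; lia).
      destruct (Hbr l ltac:(unfold l; lia)) as [[[[J e'] eta'] HJ] [k Hk]].
      destruct (IH ltac:(lia) J e' eta') as [HsJ Hb]; [rewrite El; exact HJ|].
      specialize (HsJ ltac:(lia)).
      rewrite Hk in HJ.
      destruct (tnode_child m n g _ _ _ _ _ _ _ _ Ht HJ) as [k' [Ik [Hnth [HJIk HJI]]]].
      destruct (tnode_valid m n g Hg _ _ Ht) as [Veta _]. simpl in Veta.
      destruct (eanal_props n eta Veta Ik e' eta') as [_ [_ [_ Hwj]]]; [eapply nth_error_In; eauto|].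
      split.
      + intros H1. specialize (HJI (Hne l ltac:(lia) ltac:(unfold l; lia))). unfold subI in *. lia.
      + rewrite (ev_step m n eta Veta k' Ik e' eta' b Hnth).
        2:{ intros d Hd. specialize (Hbs d Hd). unfold in_itv, subI in *. lia. }
        eapply Rle_trans; [apply abs_wt, Hm; exact Hwj|].
        simpl. rewrite Rmult_assoc. apply Rmult_le_compat_l; lra. }
  destruct (Q r (le_n r) _ _ _ (ltac:(rewrite Nat.sub_diag, Hu0; apply tn_root))) as [_ Hfin].
  destruct (tnode_valid m n g Hg _ _ Hv) as [Vv Hfst]. simpl in Vv, Hfst.
  pose proof (PB2 m n a Hm Hnorm etav Vv (fst Iv) (snd Iv) Hfst) as P.
  fold b in P. rewrite S2 in Hgt.
  assert (/ 4 ^ (i + 1) < (/ 4) ^ r * 4 ^ 1).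
  { simpl. assert (0 <= (/4) ^ r) by (apply pow_le; lra). nra. }
  apply arith in H. lia.
Qed.


Lemma block_seq_tail h fs : block_seq (h :: fs) -> block_seq fs.
Proof. intros H i1 i2 Hi. apply (H (S i1) (S i2)). simpl; lia. Qed.

Lemma block_seq_head h fs f' : block_seq (h :: fs) -> In f' fs -> blocks h f'.
Proof.
  intros H Hin. destruct (In_nth fs f' (fun _ => 0) Hin) as [q [Hq Eq]].
  pose proof (H 0%nat (S q) ltac:(simpl; lia)) as B. simpl in B. rewrite Eq in B. exact B.
Qed.

Lemma sumf_block : forall fs (g : nat -> R) x, block_seq fs -> In g fs -> g x <> 0 -> sumf fs x = g x.
Proof.
  induction fs as [|h fs IH]; intros g x Hb Hin Hg; [destruct Hin|].
  change (sumf (h :: fs) x) with (h x + sumf fs x).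
  destruct Hin as [<-|Hin].
  - assert (sumf fs x = 0).
    { clear IH. assert (Hall : forall f', In f' fs -> f' x = 0).
      { intros f' Hf'. destruct (Req_dec (f' x) 0); auto.
        pose proof (block_seq_head _ _ _ Hb Hf' x x Hg H). lia. }
      clear Hb. induction fs as [|h' fs IH']; [reflexivity|].
      change (sumf (h' :: fs) x) with (h' x + sumf fs x). rewrite (Hall h') by (left; auto).
      rewrite IH' by (intros; apply Hall; right; auto). ring. }
    lra.
  - rewrite (IH g x (block_seq_tail _ _ Hb) Hin Hg).
    assert (h x = 0).
    { destruct (Req_dec (h x) 0); auto.
      pose proof (block_seq_head _ _ _ Hb Hin x x H Hg). lia. }
    lra.
Qed.

Lemma part2 m n i f Tn ft v u r l :
  (forall j, (1 <= j)%nat -> 4 <= INR (m j)) -> W_tree_analysis m n f Tn ft ->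
  branch Tn u r v -> (forall x, ft v x = estar l x) -> / 4 ^ (i + 1) < f l -> (r <= i)%nat.
Proof.
  intros Hm [[Tnil [Tclos _]] [Hroot [_ Hnt]]] [Hu0 [Hur Hbr]] Hv Hf.
  assert (Q : forall j, (j <= r)%nat -> ft (u (r - j)%nat) l <> 0 /\
                 Rabs (ft (u (r - j)%nat) l) <= (/ 4) ^ j).
  { induction j as [|j IH]; intros Hj.
    - rewrite Nat.sub_0_r, Hur, Hv. unfold estar. rewrite Nat.eqb_refl.
      rewrite Rabs_R1. simpl; split; lra.
    - set (l' := (r - S j)%nat). assert (El : (r - j)%nat = S l') by (unfold l'; lia).
      destruct (Hbr l' ltac:(unfold l'; lia)) as [Tc [k Hk]].
      destruct (IH ltac:(lia)) as [Hnz Hb]. rewrite El, Hk in Hnz, Hb. rewrite Hk in Tc.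
      destruct (Hnt (u l') (Tclos _ _ Tc) (ex_intro _ k Tc)) as
        [j0 [S0 [Hj0 [_ [HS [_ [_ [Hblk Hft]]]]]]]].
      assert (Hin : In (ft (u l' ++ [k])) (map ft S0)).
      { apply in_map. apply HS. eauto. }
      rewrite Hft, (sumf_block _ _ _ Hblk Hin Hnz).
      specialize (Hm j0 Hj0). split.
      + apply Rmult_integral_contrapositive_currified; auto. apply Rinv_neq_0_compat; lra.
      + replace (/ INR (m j0) * ft (u l' ++ [k]) l) with (/ INR (m j0) * sgn true * ft (u l' ++ [k]) l)
          by (simpl; ring).
        eapply Rle_trans; [apply abs_wt; exact Hm|]. simpl. apply Rmult_le_compat_l; lra. }
  destruct (Q r (le_n r)) as [_ Hb]. rewrite Nat.sub_diag, Hu0, Hroot in Hb.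
  assert (/ 4 ^ (i + 1) < (/ 4) ^ r * 4 ^ 0).
  { simpl. pose proof (Rle_abs (f l)). lra. }
  apply arith in H. lia.
Qed.

Theorem lemma3p2 (m n : nat -> nat) (i : nat) :
  good_seqs m n -> (1 <= i)%nat ->
  (* (1) *)
  (forall (g : gam) (a : gam -> R) (v : list nat) (u : nat -> list nat) (r : nat),
     valid n g ->
     tree_of m n g v -> v <> nil -> branch (tree_of m n g) u r v ->
     fin_supp n a -> normalised m n a ->
     covering_index m n g a v ->
     (forall xi, valid n xi -> Rabs (a xi) < / 4 ^ (i + 3)) ->
     / 4 ^ (i + 1) < Rabs (ev m g a) ->
     (r <= i + 1)%nat) /\
  (* (2) *)
  (forall (f : nat -> R) (Tn : list nat -> Prop) (ft : list nat -> nat -> R)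
          (v : list nat) (u : nat -> list nat) (r l : nat),
     inW m n f -> W_tree_analysis m n f Tn ft ->
     Tn v -> v <> nil -> branch Tn u r v ->
     (forall x, ft v x = estar l x) ->
     / 4 ^ (i + 1) < f l ->
     (r <= i)%nat).
Proof.
  intros Hgs Hi.
  assert (Hm : forall j, (1 <= j)%nat -> 4 <= INR (m j)).
  { intros j Hj. pose proof (m_ge4 m n Hgs j Hj) as H. apply le_INR in H.
    replace 4 with (INR 4) by (simpl; lra). exact H. }
  split.
  - intros g a v u r Hg _ _ Hbr Hfs Hn Hc _ Hgt. eapply part1; eauto.
  - intros f Tn ft v u r l _ Hta _ _ Hbr Hv Hf. eapply part2; eauto.
Qed.
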